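(* Let $m\ge1$, $\zeta=\zeta_m$ a primitive $m$th root of unity, $t=1-\zeta$, $W^{(0)}_m=\prod_{j\in[0,m-1]}\mathbb{Z}[\zeta]$, and \[ W^{(1)}_m=\Bigl\{(y_j)_{j\in[0,m-1]}\in W^{(0)}_m\;\Bigm|\;\sum_{j\in[0,i]}(-1)^j\binom{i}{j}y_j\equiv0\pmod{t^i\mathbb{Z}[\zeta]}\ \text{for all }i\in[0,m-1]\Bigr\}. \] Let $C_m$ be cyclic with generator $c$ and $\omega_m\colon\mathbb{Z}[\zeta]C_m\to W^{(0)}_m$, $c\mapsto(\zeta^j)_{j\in[0,m-1]}$, the cyclic Wedderburn embedding. Then: (i) the image of $\omega_m$ is contained in $W^{(1)}_m$; (ii) the elements $\xi_{m,i}:=\bigl((-1)^it^i\binom{j}{i}\bigr)_{j\in[0,m-1]}$, $i\in[0,m-1]$, form a $\mathbb{Z}[\zeta]$-linear basis of $W^{(1)}_m$; (iii) there are $\mathbb{Z}[\zeta]$-bases of $W^{(1)}_m$ and $W^{(0)}_m$ with respect to which the inclusion $W^{(1)}_m\subseteq W^{(0)}_m$ is diagonal with diagonal entries $t^0,t^1,\dots,t^{m-1}$ (its $(i+1)$st elementary divisor is $t^i$); (iv) the $\mathbb{Z}[\zeta]$-linear determinant of the inclusion $W^{(1)}_m\subseteq W^{(0)}_m$ is $t^{m(m-1)/2}$ (up to a unit).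
   Context: $\binom{j}{i}=0$ if $i>j$. $[a,b]=\{x\in\mathbb{Z}:a\le x\le b\}$. *)

(* Defs.v *)
From HB Require Import structures.
From mathcomp Require Import all_boot all_order all_algebra all_field.
Set Implicit Arguments. Unset Strict Implicit. Unset Printing Implicit Defensive.
Import Order.TTheory GRing.Theory Num.Theory.
Local Open Scope ring_scope.

(* Everything lives inside algC (algebraic complex numbers); z plays the role
   of the primitive m-th root of unity zeta. *)

Definition inZz (z x : algC) : Prop :=
  exists p : {poly int}, x = (map_poly (fun k : int => k%:~R) p).[z].

Definition inW0 (m : nat) (z : algC) (y : 'rV[algC]_m) : Prop :=
  forall j : 'I_m, inZz z (y 0 j).

(* W^(1)_m : the congruence conditions (binomial 'C(i,j) = 0 for j > i) *)
Definition inW1 (m : nat) (z : algC) (y : 'rV[algC]_m) : Prop :=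
  inW0 z y /\
  forall i : 'I_m, exists w : algC, inZz z w /\
    \sum_(j < m) (-1) ^+ j * ('C(i, j))%:R * y 0 j = (1 - z) ^+ i * w.

(* cyclic Wedderburn embedding, applied to the element \sum_k a_k c^k of
   Z[z]C_m (coefficients a_k in Z[z], k in [0,m-1]):
   c^k |-> (z^(j k))_j, extended Z[z]-linearly. *)
Definition omega (m : nat) (z : algC) (a : 'I_m -> algC) : 'rV[algC]_m :=
  \row_(j < m) \sum_(k < m) a k * z ^+ (j * k).

Definition xi (m : nat) (z : algC) (i : 'I_m) : 'rV[algC]_m :=
  \row_(j < m) ((-1) ^+ i * (1 - z) ^+ i * ('C(j, i))%:R).

Definition is_Zbasis (m : nat) (z : algC) (S : 'rV[algC]_m -> Prop)
    (b : 'I_m -> 'rV[algC]_m) : Prop :=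
  [/\ forall i, S (b i),
      (forall a : 'I_m -> algC, (forall i, inZz z (a i)) ->
          \sum_(i < m) a i *: b i = 0 -> forall i, a i = 0)
    & (forall w, S w -> exists a : 'I_m -> algC,
          (forall i, inZz z (a i)) /\ w = \sum_(i < m) a i *: b i)].

(* Main.v *)
Require Import Defs.
From HB Require Import structures.
From mathcomp Require Import all_boot all_order all_algebra all_field.
From mathcomp Require Import ring.
Import Order.TTheory GRing.Theory Num.Theory.
Local Open Scope ring_scope.
Section Z.
Variable z : algC.
Local Notation ev p := ((map_poly (fun k : int => k%:~R) p).[z]).

Lemma evD p q : ev (p + q) = ev p + ev q.
Proof. by rewrite rmorphD hornerD. Qed.
Lemma evM p q : ev (p * q) = ev p * ev q.
Proof. by rewrite rmorphM hornerM. Qed.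
Lemma evN p : ev (- p) = - ev p.
Proof. by rewrite rmorphN hornerN. Qed.
Lemma evC (c : int) : ev c%:P = c%:~R.
Proof. by rewrite map_polyC hornerC. Qed.
Lemma evX : ev 'X = z.
Proof. by rewrite map_polyX hornerX. Qed.

Lemma inZzD x y : inZz z x -> inZz z y -> inZz z (x + y).
Proof. by move=> [p ->] [q ->]; exists (p + q); rewrite evD. Qed.
Lemma inZzM x y : inZz z x -> inZz z y -> inZz z (x * y).
Proof. by move=> [p ->] [q ->]; exists (p * q); rewrite evM. Qed.
Lemma inZzN x : inZz z x -> inZz z (- x).
Proof. by move=> [p ->]; exists (- p); rewrite evN. Qed.
Lemma inZzB x y : inZz z x -> inZz z y -> inZz z (x - y).
Proof. by move=> hx hy; apply: inZzD => //; apply: inZzN. Qed.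
Lemma inZz_int (c : int) : inZz z c%:~R.
Proof. by exists c%:P; rewrite evC. Qed.
Lemma inZz_nat (n : nat) : inZz z n%:R.
Proof. by have := inZz_int n; rewrite pmulrn. Qed.
Lemma inZz0 : inZz z 0. Proof. exact: (inZz_nat 0). Qed.
Lemma inZz1 : inZz z 1. Proof. exact: (inZz_nat 1). Qed.
Lemma inZzz : inZz z z. Proof. by exists 'X; rewrite evX. Qed.
Lemma inZzX x n : inZz z x -> inZz z (x ^+ n).
Proof.
move=> hx; elim: n => [|n IH]; first by rewrite expr0; apply: inZz1.
by rewrite exprS; apply: inZzM.
Qed.
Lemma inZz_sum (I : Type) (r : seq I) (P : pred I) (F : I -> algC) :
  (forall i, P i -> inZz z (F i)) -> inZz z (\sum_(i <- r | P i) F i).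
Proof. by move=> h; apply: big_ind => //; [apply: inZz0 | apply: inZzD]. Qed.
Lemma inZz_prod (I : Type) (r : seq I) (P : pred I) (F : I -> algC) :
  (forall i, P i -> inZz z (F i)) -> inZz z (\prod_(i <- r | P i) F i).
Proof. by move=> h; apply: big_ind => //; [apply: inZz1 | apply: inZzM]. Qed.
Lemma inZz_sign (b : nat) : inZz z ((-1) ^+ b).
Proof. by apply: inZzX; apply: inZzN; apply: inZz1. Qed.
Lemma inZz_det n (A : 'M[algC]_n) : (forall i j, inZz z (A i j)) -> inZz z (\det A).
Proof.
move=> h; rewrite /determinant; apply: inZz_sum => s _.
apply: inZzM; first exact: inZz_sign.
by apply: inZz_prod.
Qed.
Lemma inZz_mulmx n (A B : 'M[algC]_n) : (forall i j, inZz z (A i j)) ->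
  (forall i j, inZz z (B i j)) -> forall i j, inZz z ((A *m B) i j).
Proof.
by move=> hA hB i j; rewrite mxE; apply: inZz_sum => k _; apply: inZzM.
Qed.
End Z.

Definition Q (i : nat) : {poly algC} := (1 - 'X) ^+ i.

Lemma Qpoly i : Q i = \poly_(l < i.+1) ((-1) ^+ l * ('C(i, l))%:R).
Proof.
rewrite /Q exprDn poly_def; apply: eq_bigr => l _.
rewrite expr1n mul1r -mul_polyC rmorphM /= rmorph_nat rmorphXn /= polyCN polyC1.
by rewrite -mulr_natr -mulrA [_ * 'X^l]mulrC mulrA -exprMn mulN1r.
Qed.

Lemma coefQ i j : (Q i)`_j = (-1) ^+ j * ('C(i, j))%:R.
Proof.
rewrite Qpoly coef_poly; case: ltnP => // h.
by rewrite bin_small ?mulr0.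
Qed.

Lemma sizeQ i : (size (Q i) <= i.+1)%N.
Proof. by rewrite Qpoly size_poly. Qed.

Lemma comp_wide (p q : {poly algC}) n : (size p <= n)%N ->
  p \Po q = \sum_(j < n) p`_j *: q ^+ j.
Proof.
move=> h; rewrite comp_polyE (big_ord_widen n (fun j => p`_j *: q ^+ j) h).
rewrite big_mkcond; apply: eq_bigr => j _; case: ltnP => // hj.
by rewrite nth_default ?scale0r.
Qed.

Lemma QcompQ i : Q i \Po (1 - 'X) = 'X ^+ i.
Proof.
rewrite /Q rmorphXn /= rmorphB /= comp_polyX.
by rewrite -/(comp_poly _ 1) rmorph1 opprB addrC subrK.
Qed.

Definition Pm m : 'M[algC]_m := \matrix_(i, j) ((-1) ^+ j * ('C(i, j))%:R).

Lemma PP m : Pm m *m Pm m = 1%:M.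
Proof.
apply/matrixP => i k; rewrite !mxE.
have -> : \sum_j Pm m i j * Pm m j k = (\sum_(j < m) (Q i)`_j *: Q j)`_k.
  rewrite coef_sum; apply: eq_bigr => j _; rewrite coefZ !coefQ !mxE //.
have hs : (size (Q i) <= m)%N by apply: leq_trans (sizeQ i) _.
rewrite -comp_wide // QcompQ coefXn.
by rewrite eq_sym.
Qed.

Section Main.
Variables (m : nat) (z : algC).
Local Notation t := (1 - z).
Local Notation PT := (Pm m)^T.
Local Notation Zent K := (forall i j, inZz z (K i j)).

Definition e0 (i : 'I_m) : 'rV[algC]_m := \row_j ((-1) ^+ i * ('C(j, i))%:R).
Definition mxf (b : 'I_m -> 'rV[algC]_m) : 'M[algC]_m := \matrix_(i, j) b i 0 j.

Lemma sum_mxf (a : 'I_m -> algC) b : \sum_i a i *: b i = \row_i a i *m mxf b.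
Proof.
apply/rowP => j; rewrite !mxE summxE; apply: eq_bigr => i _; by rewrite !mxE.
Qed.

Lemma rowmxf b i : row i (mxf b) = b i.
Proof. by apply/rowP => j; rewrite !mxE; congr (b i _ _); apply: val_inj; case: (0 : 'I_1) => [[]]. Qed.

Lemma rowK (K : 'M[algC]_m) b i : row i (K *m mxf b) = \sum_k K i k *: b k.
Proof.
rewrite row_mul sum_mxf; congr (_ *m _); by apply/rowP => k; rewrite !mxE.
Qed.

Lemma mxf_e0 : mxf e0 = PT.
Proof. by apply/matrixP => i j; rewrite !mxE. Qed.

Lemma PTPT : PT *m PT = 1%:M.
Proof. by rewrite -trmx_mul PP trmx1. Qed.

Lemma L_indep S b (K : 'M[algC]_m) : is_Zbasis z S b -> Zent K ->
  K *m mxf b = 0 -> K = 0.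
Proof.
move=> [_ hi _] hK h; apply/matrixP => i k; rewrite mxE.
apply: (hi (fun k => K i k)).
  by move=> k'; apply: hK.
by rewrite -rowK h row0.
Qed.

Lemma L_span S b (v : 'I_m -> 'rV[algC]_m) : is_Zbasis z S b ->
  (forall i, S (v i)) -> exists K : 'M[algC]_m, Zent K /\ mxf v = K *m mxf b.
Proof.
move=> [_ _ hs] hv.
have /fin_all_exists [f hf] : forall i, exists a : 'I_m -> algC,
   (forall k, inZz z (a k)) /\ v i = \sum_(k < m) a k *: b k.
  by move=> i; apply: hs.
exists (\matrix_(i, k) f i k); split; first by move=> i k; rewrite mxE; case: (hf i).
apply/row_matrixP => i; rewrite rowK rowmxf; case: (hf i) => _ ->.
by apply: eq_bigr => k _; rewrite mxE.
Qed.

Lemma L_one S b (K : 'M[algC]_m) : is_Zbasis z S b -> Zent K ->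
  mxf b = K *m mxf b -> K = 1%:M.
Proof.
move=> hb hK h; apply/eqP; rewrite -subr_eq0; apply/eqP.
apply: (@L_indep S b _ hb).
  move=> i j; rewrite !mxE; apply: inZzB; [exact: hK | exact: inZz_nat].
by rewrite mulmxBl mul1mx -h subrr.
Qed.

Lemma xi_e0 i : xi z i = t ^+ i *: e0 i.
Proof. by apply/rowP => j; rewrite !mxE mulrA [t ^+ i * _]mulrC. Qed.

Lemma sum_e0 (a : 'I_m -> algC) : \sum_i a i *: e0 i = \row_i a i *m PT.
Proof. by rewrite sum_mxf mxf_e0. Qed.

Lemma sum_xi (a : 'I_m -> algC) :
  \sum_i a i *: xi z i = \row_i (a i * t ^+ i) *m PT.
Proof.
rewrite -sum_e0; apply: eq_bigr => i _; by rewrite xi_e0 scalerA.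
Qed.

Lemma W1sum (y : 'rV[algC]_m) (i : 'I_m) :
  \sum_(j < m) (-1) ^+ j * ('C(i, j))%:R * y 0 j = (y *m PT) 0 i.
Proof. rewrite mxE; apply: eq_bigr => j _; by rewrite !mxE mulrC. Qed.

End Main.

Section Parts.
Variables (m : nat) (z : algC).
Hypothesis hm : (0 < m)%N.
Hypothesis hz : m.-primitive_root z.
Local Notation t := (1 - z).
Local Notation PT := (Pm m)^T.

Lemma tn0 (i : 'I_m) : t ^+ i != 0.
Proof.
case: i => [[|i] hi] /=; first by rewrite expr0 oner_neq0.
rewrite expf_neq0 // subr_eq0; apply/eqP => h.
have := prim_order_dvd hz 1; rewrite -h expr1n eqxx dvdn1 => /eqP hm1.
by rewrite hm1 in hi.
Qed.

Lemma partI (a : 'I_m -> algC) : (forall k, inZz z (a k)) -> inW1 z (omega z a).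
Proof.
move=> ha; split.
  move=> j; rewrite mxE; apply: inZz_sum => k _; apply: inZzM => //.
  by apply: inZzX; apply: inZzz.
move=> i; exists (\sum_(k < m) a k * (\sum_(l < k) z ^+ l) ^+ i); split.
  apply: inZz_sum => k _; apply: inZzM => //; apply: inZzX.
  by apply: inZz_sum => l _; apply: inZzX; apply: inZzz.
have e : forall k : 'I_m, (Q i).[z ^+ k] =
    \sum_(j < m) (-1) ^+ j * ('C(i, j))%:R * z ^+ (j * k).
  move=> k; rewrite (@horner_coef_wide _ m); last exact: leq_trans (sizeQ i) _.
  by apply: eq_bigr => j _; rewrite coefQ mulnC exprM.
have e2 : forall k : 'I_m, (Q i).[z ^+ k] = t ^+ i * (\sum_(l < k) z ^+ l) ^+ i.
  move=> k; rewrite /Q !hornerE -exprMn.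
  congr (_ ^+ _); rewrite -opprB subrX1 -mulNr opprB //.
rewrite big_distrr /=.
under eq_bigr => j _ do rewrite mxE big_distrr /=.
rewrite exchange_big /=; apply: eq_bigr => k _.
rewrite mulrCA -e2 e big_distrr /=; apply: eq_bigr => j _.
by rewrite mulrCA.
Qed.


Lemma xi_in (i : 'I_m) : inW1 z (xi z i).
Proof.
split.
  move=> j; rewrite mxE; apply: inZzM; last exact: inZz_nat.
  apply: inZzM; first exact: inZz_sign.
  by apply: inZzX; apply: inZzB; [exact: inZz1 | exact: inZzz].
move=> i'; exists (i == i')%:R; split; first exact: inZz_nat.
rewrite W1sum xi_e0 -scalemxAl mxE.
have -> : @e0 m i = row i PT by rewrite -(mxf_e0 m) rowmxf.
rewrite -row_mul PTPT !mxE.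
by case: eqP => [-> | _]; rewrite ?mulr0.
Qed.

Lemma partII : is_Zbasis z (@inW1 m z) (@xi m z).
Proof.
split; first exact: xi_in.
  move=> a ha; rewrite sum_xi => h i.
  have : \row_i (a i * t ^+ i) = 0 :> 'rV_m.
    by rewrite -[LHS]mulmx1 -PTPT mulmxA h !mul0mx.
  move/rowP/(_ i); rewrite !mxE => /eqP; rewrite mulf_eq0 (negbTE (tn0 i)) orbF.
  by move/eqP.
move=> y [_ hy].
have /fin_all_exists [w hw] := hy.
exists w; split; first by move=> i; case: (hw i).
rewrite sum_xi.
have -> : \row_i (w i * t ^+ i) = y *m PT.
  apply/rowP => i; rewrite mxE -W1sum; case: (hw i) => _ ->; by rewrite mulrC.
by rewrite -mulmxA PTPT mulmx1.
Qed.

Lemma e0_basis : is_Zbasis z (@inW0 m z) (@e0 m).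
Proof.
split.
  move=> i j; rewrite mxE; apply: inZzM; [exact: inZz_sign | exact: inZz_nat].
  move=> a ha; rewrite sum_e0 => h i.
  have : \row_i a i = 0 :> 'rV_m.
    by rewrite -[LHS]mulmx1 -PTPT mulmxA h !mul0mx.
  by move/rowP/(_ i); rewrite !mxE.
move=> y hy; exists (fun i => (y *m PT) 0 i); split.
  move=> i; rewrite mxE; apply: inZz_sum => j _; apply: inZzM => //.
  rewrite !mxE; apply: inZzM; [exact: inZz_sign | exact: inZz_nat].
rewrite sum_e0.
have -> : \row_i (y *m PT) 0 i = y *m PT by apply/rowP => i; rewrite mxE.
by rewrite -mulmxA PTPT mulmx1.
Qed.


Lemma mxf_xi : mxf m (@xi m z) = diag_mx (\row_i (t ^+ i)) *m mxf m (@e0 m).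
Proof.
by apply/matrixP => i j; rewrite mul_diag_mx !mxE mulrA [t ^+ i * _]mulrC.
Qed.

Lemma sum_nat_m : (\sum_(i < m) (i : nat))%N = (m * (m - 1) %/ 2)%N.
Proof.
by rewrite -(big_mkord xpredT (fun i => i)) bin2_sum bin2 divn2 subn1.
Qed.

Lemma partIV (b1 b0 : 'I_m -> 'rV[algC]_m) (M : 'M[algC]_m) :
      is_Zbasis z (@inW1 m z) b1 -> is_Zbasis z (@inW0 m z) b0 ->
      (forall i k, inZz z (M i k)) ->
      (forall i, b1 i = \sum_(k < m) M i k *: b0 k) ->
      exists u : algC, [/\ u != 0, inZz z u, inZz z u^-1 &
        \det M = (1 - z) ^+ (m * (m - 1) %/ 2) * u].
Proof.
move=> hb1 hb0 hM hrel.
have eM : mxf m b1 = M *m mxf m b0.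
  by apply/row_matrixP => i; rewrite rowK rowmxf hrel.
have [b1i _ _] := hb1.
have [b0i _ _] := hb0.
have [e0i _ _] := e0_basis.
have [xii _ _] := partII.
have [A [hA eA]] := L_span _ _ _ _ _ hb1 xii.
have [A' [hA' eA']] := L_span _ _ _ _ _ partII b1i.
have [C [hC eC]] := L_span _ _ _ _ _ e0_basis b0i.
have [C' [hC' eC']] := L_span _ _ _ _ _ hb0 e0i.
have AA : A' *m A = 1%:M.
  apply: (L_one _ _ _ _ _ hb1); first exact: inZz_mulmx.
  by rewrite -mulmxA -eA.
have CC : C *m C' = 1%:M.
  apply: (L_one _ _ _ _ _ hb0); first exact: inZz_mulmx.
  by rewrite -mulmxA -eC'.
pose D : 'M[algC]_m := diag_mx (\row_i (t ^+ i)).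
have hD : forall i j, inZz z (D i j).
  move=> i j; rewrite !mxE; case: (i == j); rewrite ?mulr1n ?mulr0n;
    last exact: inZz0.
  by apply: inZzX; apply: inZzB; [exact: inZz1 | exact: inZzz].
have eD : D = A *m M *m C.
  apply/eqP; rewrite -subr_eq0; apply/eqP.
  apply: (L_indep _ _ _ _ _ e0_basis).
    move=> i j; rewrite mxE; apply: inZzD; first exact: hD.
    by rewrite mxE; apply: inZzN; apply: inZz_mulmx => //; apply: inZz_mulmx.
  by rewrite mulmxBl -mxf_xi eA eM eC !mulmxA subrr.
have dA : \det A' * \det A = 1 by rewrite -det_mulmx AA det1.
have dC : \det C * \det C' = 1 by rewrite -det_mulmx CC det1.
have dD : \det D = t ^+ (m * (m - 1) %/ 2).
  by rewrite det_diag -sum_nat_m -prodrXr; apply: eq_bigr => i _; rewrite mxE.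
have uv : (\det A' * \det C') * (\det A * \det C) = 1.
  by rewrite mulrACA dA mul1r mulrC dC.
have un0 : \det A' * \det C' != 0.
  by apply/eqP => h; move: uv; rewrite h mul0r => /eqP; rewrite eq_sym oner_eq0.
exists (\det A' * \det C'); split => //.
- by apply: inZzM; apply: inZz_det.
- have -> : (\det A' * \det C')^-1 = \det A * \det C.
    by rewrite -[LHS]mulr1 -uv mulKf.
  by apply: inZzM; apply: inZz_det.
- rewrite -dD eD !det_mulmx.
  transitivity (\det M * ((\det A' * \det A) * (\det C * \det C'))).
    by rewrite dA dC !mulr1.
  ring.
Qed.

End Parts.

Theorem lemma3p18 (m : nat) (z : algC) :
  (0 < m)%N -> m.-primitive_root z ->
  (* (i) *)
  (forall a : 'I_m -> algC, (forall k, inZz z (a k)) -> inW1 z (omega z a)) /\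
  (* (ii) *)
  is_Zbasis z (@inW1 m z) (@xi m z) /\
  (* (iii) *)
  (exists (b1 b0 : 'I_m -> 'rV[algC]_m),
      [/\ is_Zbasis z (@inW1 m z) b1, is_Zbasis z (@inW0 m z) b0
        & forall i : 'I_m, b1 i = (1 - z) ^+ i *: b0 i]) /\
  (* (iv) *)
  (forall (b1 b0 : 'I_m -> 'rV[algC]_m) (M : 'M[algC]_m),
      is_Zbasis z (@inW1 m z) b1 -> is_Zbasis z (@inW0 m z) b0 ->
      (forall i k, inZz z (M i k)) ->
      (forall i, b1 i = \sum_(k < m) M i k *: b0 k) ->
      exists u : algC, [/\ u != 0, inZz z u, inZz z u^-1 &
        \det M = (1 - z) ^+ (m * (m - 1) %/ 2) * u]).
Proof.
move=> hm hz; split; first exact: partI.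
split; first exact: partII.
split; last exact: partIV.
exists (@xi m z), (@e0 m); split.
- exact: partII.
- exact: e0_basis.
- exact: xi_e0.
Qed.
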